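(* Let $L\ge 1$ and $N_\nu\ge 1$ be integers. Suppose there are finitely many paths indexed by $l$, each with a path metric $\mathrm{PM}_l\in\mathbb{R}$ and an LLR vector $\alpha_l=(\alpha_{0,l},\dots,\alpha_{N_\nu-1,l})\in(\mathbb{R}\setminus\{0\})^{N_\nu}$. Assume that for each $l$ the absolute values $|\alpha_{i,l}|$ are pairwise distinct and that the entries are indexed so that $|\alpha_{0,l}|<|\alpha_{1,l}|<\dots<|\alpha_{N_\nu-1,l}|$. A candidate is a pair $(l,\eta)$ with $\eta\in\{+1,-1\}^{N_\nu}$, and its metric is $$M(l,\eta)=\mathrm{PM}_l+\sum_{i=0}^{N_\nu-1}\ln\left(1+e^{-\eta_i\alpha_{i,l}}\right).$$ If a candidate $(l,\eta)$ has $\eta_k\neq \operatorname{sgn}(\alpha_{k,l})$ for some index $k\ge L-1$, then there exist at least $L$ candidates of the form $(l,\eta')$ with $\eta'\neq\eta$ and $M(l,\eta')<M(l,\eta)$. Consequently, every candidate $(l,\eta)$ belonging to some set of $L$ candidates of smallest metric (the set of survivors of successive-cancellation list decoding with list size $L$ over a Rate-1 node) satisfies $\eta_i=\operatorname{sgn}(\alpha_{i,l})$ for all $i\ge L-1$. In other words, path splitting is needed at most at the $\min(L-1,N_\nu)$ least reliable positions of each path, and all remaining bits equal the hard decision on the LLR ($\beta_{i,l}=0$ if $\alpha_{i,l}\ge0$, and $1$ otherwise).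
   Context: Setting: list decoding of a Rate-1 constituent code (all $N_\nu$ bits are information bits) of a polar code. A bit estimate $\beta\in\{0,1\}$ is encoded as $\eta=1-2\beta\in\{+1,-1\}$. $\operatorname{sgn}$ denotes the sign function. In successive-cancellation list decoding with list size $L$, the $L$ candidates of smallest path metric survive. The ordering of LLRs by increasing absolute value is the reliability order, with index $0$ the least reliable. *)

(* Defs.v *)
From Stdlib Require Import Reals List.
Import ListNotations.
Open Scope R_scope.

Fixpoint rsum (f : nat -> R) (n : nat) : R :=
  match n with
  | O => 0
  | S m => rsum f m + f m
  end.

Definition sgn (x : R) : R :=
  if Rlt_dec 0 x then 1 else if Rlt_dec x 0 then -1 else 0.

Definition bipolar (N : nat) (eta : list R) : Prop :=
  length eta = N /\ Forall (fun x => x = 1 \/ x = -1) eta.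

(* Candidate metric M(l, eta) = PM_l + sum_{i<N} ln(1 + exp(-eta_i * alpha_{i,l})).
   alpha l i is the LLR alpha_{i,l}; eta_i is nth i eta 0. *)
Definition metric (N : nat) (PM : nat -> R) (alpha : nat -> nat -> R)
  (l : nat) (eta : list R) : R :=
  PM l + rsum (fun i => ln (1 + exp (- (nth i eta 0) * alpha l i))) N.

Definition candidate (P N : nat) (c : nat * list R) : Prop :=
  (fst c < P)%nat /\ bipolar N (snd c).

(* S is a set of L candidates of smallest metric (ties broken arbitrarily). *)
Definition survivors (P N L : nat) (PM : nat -> R) (alpha : nat -> nat -> R)
  (S : list (nat * list R)) : Prop :=
  NoDup S /\ length S = L /\ Forall (candidate P N) S /\
  (forall c c', In c S -> candidate P N c' -> ~ In c' S ->
     metric N PM alpha (fst c) (snd c) <= metric N PM alpha (fst c') (snd c')).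

(* Main.v *)
Require Import Defs.
From Stdlib Require Import Reals List Lra Lia Classical.
Import ListNotations.
Open Scope R_scope.

Fixpoint upd (l : list R) (k : nat) (v : R) : list R :=
  match l, k with
  | [], _ => []
  | x :: t, O => v :: t
  | x :: t, S k' => x :: upd t k' v
  end.

Lemma length_upd l k v : length (upd l k v) = length l.
Proof. revert k; induction l; intros [|k]; simpl; auto. Qed.

Lemma nth_upd_eq l k v : (k < length l)%nat -> nth k (upd l k v) 0 = v.
Proof. revert k; induction l; intros [|k]; simpl; intros; try lia; auto. apply IHl; lia. Qed.

Lemma nth_upd_neq l k v i : i <> k -> nth i (upd l k v) 0 = nth i l 0.
Proof.
  revert k i; induction l; intros [|k] [|i]; simpl; intros; auto; try lia.
  all: destruct i; auto; apply IHl; lia.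
Qed.

Lemma Forall_upd (P : R -> Prop) l k v : Forall P l -> P v -> Forall P (upd l k v).
Proof.
  revert k; induction l; intros [|k] H Hv; simpl; auto; inversion H; subst; constructor; auto.
Qed.

Lemma bipolar_nth N eta k : bipolar N eta -> (k < N)%nat -> nth k eta 0 = 1 \/ nth k eta 0 = -1.
Proof.
  intros [Hl HF] Hk. rewrite Forall_forall in HF. apply HF. apply nth_In. lia.
Qed.

Lemma bipolar_flip N eta k : bipolar N eta -> (k < N)%nat -> bipolar N (upd eta k (- nth k eta 0)).
Proof.
  intros Hb Hk. destruct (bipolar_nth _ _ _ Hb Hk) as [E|E]; destruct Hb as [Hl HF]; split.
  - rewrite length_upd; auto.
  - apply Forall_upd; auto. lra.
  - rewrite length_upd; auto.
  - apply Forall_upd; auto. lra.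
Qed.

Lemma rsum_point (f g : nat -> R) j N :
  (forall i, i <> j -> g i = f i) ->
  rsum g N = rsum f N + (if Nat.ltb j N then g j - f j else 0).
Proof.
  intros H; induction N; simpl; [lra|].
  rewrite IHN. destruct (Nat.eq_dec N j) as [->|Hn].
  - replace (Nat.ltb j j) with false by (symmetry; apply Nat.ltb_ge; lia).
    replace (Nat.ltb j (S j)) with true by (symmetry; apply Nat.ltb_lt; lia). lra.
  - rewrite (H N Hn).
    destruct (Nat.ltb_spec j N); destruct (Nat.ltb_spec j (S N)); try lia; lra.
Qed.

Lemma ln_id a : ln (1 + exp a) = a + ln (1 + exp (- a)).
Proof.
  replace (1 + exp a) with (exp a * (1 + exp (-a))).
  - rewrite ln_mult, ln_exp; auto. apply exp_pos. pose proof (exp_pos (-a)); lra.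
  - rewrite Rmult_plus_distr_l, <- exp_plus. replace (a + - a) with 0 by lra. rewrite exp_0. lra.
Qed.

Lemma metric_flip N PM alpha l eta j : (j < N)%nat -> length eta = N ->
  metric N PM alpha l (upd eta j (- nth j eta 0)) =
  metric N PM alpha l eta + nth j eta 0 * alpha l j.
Proof.
  intros Hj Hl. unfold metric.
  rewrite (rsum_point (fun i => ln (1 + exp (- nth i eta 0 * alpha l i)))
     (fun i => ln (1 + exp (- nth i (upd eta j (- nth j eta 0)) 0 * alpha l i))) j N).
  - replace (Nat.ltb j N) with true by (symmetry; apply Nat.ltb_lt; lia).
    rewrite nth_upd_eq by lia.
    replace (- - nth j eta 0 * alpha l j) with (nth j eta 0 * alpha l j) by ring.
    rewrite (ln_id (nth j eta 0 * alpha l j)).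
    replace (- (nth j eta 0 * alpha l j)) with (- nth j eta 0 * alpha l j) by ring. lra.
  - intros i Hi. simpl. rewrite nth_upd_neq; auto.
Qed.

Lemma NoDup_map_in {A B} (f : A -> B) l : NoDup l ->
  (forall x y, In x l -> In y l -> f x = f y -> x = y) -> NoDup (map f l).
Proof.
  induction l; intros Hn Hi; simpl; constructor.
  - intro Hin. apply in_map_iff in Hin as [y [Hy Hy']].
    inversion Hn; subst. assert (y = a) by (apply Hi; simpl; auto). subst; auto.
  - inversion Hn; subst. apply IHl; auto. intros; apply Hi; simpl; auto.
Qed.

Lemma sgn_cases x : x <> 0 -> (0 < x /\ sgn x = 1) \/ (x < 0 /\ sgn x = -1).
Proof.
  intros H; unfold sgn. destruct (Rlt_dec 0 x); [left; auto|].
  destruct (Rlt_dec x 0); [right; auto|]. lra.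
Qed.

Lemma part1 (L N P : nat) (PM : nat -> R) (alpha : nat -> nat -> R)
  (Hnz : forall l i, (l < P)%nat -> (i < N)%nat -> alpha l i <> 0)
  (Hord : forall l i j, (l < P)%nat -> (i < j)%nat -> (j < N)%nat ->
            Rabs (alpha l i) < Rabs (alpha l j)) :
  (forall l eta, (l < P)%nat -> bipolar N eta ->
     (exists k, (L - 1 <= k)%nat /\ (k < N)%nat /\ nth k eta 0 <> sgn (alpha l k)) ->
     exists etas : list (list R),
       (L <= length etas)%nat /\ NoDup etas /\
       Forall (fun eta' => bipolar N eta' /\ eta' <> eta /\
                 metric N PM alpha l eta' < metric N PM alpha l eta) etas).
Proof.
  intros l eta Hl Hb [k [Hk1 [Hk2 Hw]]].
  assert (Hlen : length eta = N) by (destruct Hb; auto).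
  assert (Hek : nth k eta 0 * alpha l k = - Rabs (alpha l k)).
  { destruct (bipolar_nth _ _ _ Hb Hk2) as [E|E]; rewrite E in *;
    destruct (sgn_cases (alpha l k) (Hnz l k Hl Hk2)) as [[A B]|[A B]]; rewrite B in Hw;
    try lra; unfold Rabs; destruct (Rcase_abs (alpha l k)); lra. }
  set (eta0 := upd eta k (- nth k eta 0)).
  set (F := fun j => upd eta0 j (- nth j eta 0)).
  assert (Hb0 : bipolar N eta0) by (apply bipolar_flip; auto).
  assert (Hl0 : length eta0 = N) by (unfold eta0; rewrite length_upd; auto).
  assert (Hm0 : metric N PM alpha l eta0 = metric N PM alpha l eta - Rabs (alpha l k)).
  { unfold eta0; rewrite metric_flip; auto. lra. }
  assert (He0 : forall j, j <> k -> nth j eta0 0 = nth j eta 0).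
  { intros; unfold eta0; apply nth_upd_neq; auto. }
  assert (Hnzk : forall j, (j < N)%nat -> nth j eta 0 <> 0).
  { intros j Hj; destruct (bipolar_nth _ _ _ Hb Hj) as [E|E]; lra. }
  assert (Hk0 : nth k eta0 0 = - nth k eta 0) by (unfold eta0; apply nth_upd_eq; lia).
  assert (HFj : forall j, (j < k)%nat -> nth j (F j) 0 = - nth j eta 0).
  { intros j Hj; unfold F; apply nth_upd_eq; lia. }
  assert (HFi : forall j i, i <> j -> nth i (F j) 0 = nth i eta0 0).
  { intros; unfold F; apply nth_upd_neq; auto. }
  exists (eta0 :: map F (seq 0 k)). split; [|split].
  - simpl. rewrite length_map, length_seq. lia.
  - constructor.
    + intro Hin. apply in_map_iff in Hin as [j [Hj Hj']]. apply in_seq in Hj'.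
      assert (nth j (F j) 0 = nth j eta0 0) by (rewrite Hj; auto).
      rewrite HFj, He0 in H by lia. pose proof (Hnzk j ltac:(lia)). lra.
    + apply NoDup_map_in. apply seq_NoDup.
      intros x y Hx Hy Hxy. apply in_seq in Hx, Hy.
      destruct (Nat.eq_dec x y); auto. exfalso.
      assert (nth x (F x) 0 = nth x (F y) 0) by (rewrite Hxy; auto).
      rewrite HFj, HFi, He0 in H by lia. pose proof (Hnzk x ltac:(lia)). lra.
  - constructor.
    + split; [auto|split]; [|rewrite Hm0; pose proof (Rabs_pos_lt _ (Hnz l k Hl Hk2)); lra].
      intro E. assert (nth k eta0 0 = nth k eta 0) by (rewrite E; auto).
      pose proof (Hnzk k Hk2). lra.
    + apply Forall_forall. intros x Hx. apply in_map_iff in Hx as [j [<- Hj]].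
      apply in_seq in Hj.
      assert (Hj0 : nth j eta0 0 = nth j eta 0) by (apply He0; lia).
      split; [|split].
      * unfold F. rewrite <- Hj0. apply bipolar_flip; auto. lia.
      * intro E. assert (nth k (F j) 0 = nth k eta 0) by (rewrite E; auto).
        rewrite HFi, Hk0 in H by lia. pose proof (Hnzk k Hk2). lra.
      * unfold F. rewrite <- Hj0. rewrite metric_flip by lia. rewrite Hm0, Hj0.
        assert (Rabs (alpha l j) < Rabs (alpha l k)) by (apply Hord; auto; lia).
        assert (nth j eta 0 * alpha l j <= Rabs (alpha l j)).
        { destruct (bipolar_nth _ _ _ Hb (ltac:(lia) : (j < N)%nat)) as [E|E]; rewrite E;
          unfold Rabs; destruct (Rcase_abs (alpha l j)); lra. }
        lra.
Qed.

Theorem theorem1 (L N P : nat) (PM : nat -> R) (alpha : nat -> nat -> R)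
  (HL : (1 <= L)%nat) (HN : (1 <= N)%nat)
  (Hnz : forall l i, (l < P)%nat -> (i < N)%nat -> alpha l i <> 0)
  (Hord : forall l i j, (l < P)%nat -> (i < j)%nat -> (j < N)%nat ->
            Rabs (alpha l i) < Rabs (alpha l j)) :
  (forall l eta, (l < P)%nat -> bipolar N eta ->
     (exists k, (L - 1 <= k)%nat /\ (k < N)%nat /\ nth k eta 0 <> sgn (alpha l k)) ->
     exists etas : list (list R),
       (L <= length etas)%nat /\ NoDup etas /\
       Forall (fun eta' => bipolar N eta' /\ eta' <> eta /\
                 metric N PM alpha l eta' < metric N PM alpha l eta) etas)
  /\
  (forall S, survivors P N L PM alpha S ->
     forall l eta, In (l, eta) S ->
       forall i, (L - 1 <= i)%nat -> (i < N)%nat -> nth i eta 0 = sgn (alpha l i)).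
Proof.
  split.
  - apply part1; auto.
  - intros S [HnS [HlS [HcS Hmin]]] l eta Hin i Hi1 Hi2.
    apply NNPP; intro Hw.
    rewrite Forall_forall in HcS. destruct (HcS _ Hin) as [Hl Hb]; simpl in *.
    destruct (part1 L N P PM alpha Hnz Hord l eta Hl Hb (ex_intro _ i (conj Hi1 (conj Hi2 Hw))))
      as [etas [Hlen [Hnd HF]]].
    rewrite Forall_forall in HF.
    assert (Hsub : incl ((l, eta) :: map (pair l) etas) S).
    { intros c [<-|Hc]; auto. apply in_map_iff in Hc as [e [<- He]].
      apply NNPP; intro Hn. destruct (HF e He) as [Hbe [_ Hlt]].
      pose proof (Hmin _ (l, e) Hin ltac:(split; simpl; auto) Hn). simpl in H. lra. }
    assert (Hnd2 : NoDup ((l, eta) :: map (pair l) etas)).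
    { constructor.
      - intro Hc. apply in_map_iff in Hc as [e [He He']]. inversion He; subst.
        destruct (HF _ He') as [_ [Hne _]]. auto.
      - apply NoDup_map_in; auto. intros x y _ _ H; inversion H; auto. }
    pose proof (NoDup_incl_length Hnd2 Hsub). simpl in H. rewrite length_map in H. lia.
Qed.
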